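(* (a) For $V=\mathbb F_2\mathbb Z_4$ with basis $x^0,x^1,x^2,x^3$ and $x^\mu\circ x^\nu=x^{\mu+\nu \bmod 4}$, the associated calculus on $\mathbb F_2[x^0,\dots,x^3]$ has exactly $8$ quantum metrics: the four metrics $g_m=\sum_\mu\mathrm dx^\mu\otimes\mathrm dx^{m-\mu}$ ($m=0,1,2,3$, indices mod 4) and the four metrics $g_m+c\otimes c$, where $c=\sum_\mu\mathrm dx^\mu$ (i.e. with all coefficients complemented $0\leftrightarrow1$). (b) For $V=A_2=\mathbb F_2[X]/\langle X^4-X\rangle$ with basis $x^\mu=X^\mu$, $\mu=0,1,2,3$ (so $x^0$ is the unit and $x^\mu\circ x^\nu=x^{\mu+\nu}$ if $\mu+\nu<4$, reduced using $x^4=x^1$ otherwise), the associated calculus on $\mathbb F_2[x^0,\dots,x^3]$ has exactly $3$ quantum metrics.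
   Context: Standing setup. Work over $\mathbb F_2$. Let $(V,\circ)$ be a commutative associative algebra over $\mathbb F_2$ with basis $x^1,\dots,x^n$ and structure constants $x^\mu\circ x^\nu=\sum_\rho V^{\mu\nu}{}_\rho x^\rho$. Let $A=\mathbb F_2[x^1,\dots,x^n]$ be the polynomial algebra on the same symbols. The associated differential calculus is the $A$-bimodule $\Omega^1$ which is free as a left $A$-module on $\mathrm dx^1,\dots,\mathrm dx^n$, with right action determined by $\mathrm dx^\mu\, x^\nu=x^\nu\,\mathrm dx^\mu+\sum_\rho V^{\mu\nu}{}_\rho\,\mathrm dx^\rho$, together with the unique map $\mathrm d:A\to\Omega^1$ satisfying the Leibniz rule, $\mathrm d(x^\mu)=\mathrm dx^\mu$, $\mathrm d1=0$. The bimodule $\Omega^1\otimes_A\Omega^1$ is free as a left module on $\mathrm dx^\mu\otimes\mathrm dx^\nu$. A quantum metric is $g=\sum_{\mu,\nu}g_{\mu\nu}\mathrm dx^\mu\otimes\mathrm dx^\nu$ with constants $g_{\mu\nu}\in\mathbb F_2$, $g_{\mu\nu}=g_{\nu\mu}$, the matrix $(g_{\mu\nu})$ invertible, and $g$ central: $x^\rho g=g x^\rho$ for all $\rho$. (Here the basis is indexed $0,\dots,3$; superscripts are labels, not exponents.) *)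

(* Defs.v *)
From HB Require Import structures.
From mathcomp Require Import all_boot all_order all_algebra.
Set Implicit Arguments. Unset Strict Implicit. Unset Printing Implicit Defensive.
Import GRing.Theory.
Local Open Scope ring_scope.

(* Scalars F_2, and the polynomial ring F_2[t] used as the subring F_2[x^rho] of
   A = F_2[x^0,...,x^3] generated by one fixed generator x^rho ('X plays x^rho). *)
Notation F2 := 'F_2.
Notation P := {poly 'F_2}.

(* Structure constants: Vc mu nu rho = V^{mu nu}_rho, indices in 'I_4. *)
Definition structConst := 'I_4 -> 'I_4 -> 'I_4 -> F2.

(* Right multiplication by x^rho on Omega^1 (left-free on dx^0..dx^3):
   (sum_mu a_mu dx^mu) x^rho = a *m Rmat Vc rho, where
   dx^mu x^rho = x^rho dx^mu + sum_tau V^{mu rho}_tau dx^tau. *)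
Definition Rmat (Vc : structConst) (rho : 'I_4) : 'M[P]_4 :=
  \matrix_(mu, tau) ('X *+ (mu == tau) + (Vc mu rho tau)%:P).

(* Right action of a polynomial p(x^rho) on dx^mu: the row vector
   dx^mu . p(x^rho) = sum_i p_i dx^mu (x^rho)^i = row mu of p(Rmat). *)
Definition ract1 (Vc : structConst) (rho : 'I_4) (mu : 'I_4) (p : P) : 'rV[P]_4 :=
  row mu (horner_mx (Rmat Vc rho) (map_poly polyC p)).

(* An element sum_{mu,nu} W mu nu dx^mu (x) dx^nu of Omega^1 (x)_A Omega^1 with
   coefficients in F_2[x^rho] is represented by W : 'M[P]_4.
   Right multiplication by x^rho:
     (dx^mu (x) dx^nu) x^rho = dx^mu (x) (sum_s R_{nu s} dx^s)
                             = sum_s (dx^mu . R_{nu s}) (x) dx^s. *)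
Definition ract2 (Vc : structConst) (rho : 'I_4) (W : 'M[P]_4) : 'M[P]_4 :=
  \matrix_(tau, s) \sum_(mu < 4) \sum_(nu < 4)
     W mu nu * ract1 Vc rho mu (Rmat Vc rho nu s) 0 tau.

Definition lmul2 (W : 'M[P]_4) : 'M[P]_4 := 'X *: W.

Definition constForm (g : 'M[F2]_4) : 'M[P]_4 := map_mx polyC g.

Definition quantum_metric (Vc : structConst) (g : 'M[F2]_4) : Prop :=
  [/\ g^T = g, g \in unitmx &
      forall rho : 'I_4, lmul2 (constForm g) = ract2 Vc rho (constForm g)].

Definition VZ4 : structConst :=
  fun mu nu rho => ((mu + nu) %% 4 == rho)%N%:R.

(* V = F_2[X]/<X^4 - X>, x^mu = X^mu, X^4 = X (so X^5 = X^2, X^6 = X^3). *)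
Definition VA2 : structConst :=
  fun mu nu rho =>
    (let s := (mu + nu)%N in (if (s < 4)%N then s else (s - 3)%N) == rho)%N%:R.

Definition gZ4 (m : 'I_4) : 'M[F2]_4 :=
  \matrix_(mu, nu) ((mu + nu) %% 4 == m)%N%:R.

Definition cc : 'M[F2]_4 := const_mx 1.

Definition Z4metrics : seq 'M[F2]_4 :=
  [seq gZ4 m | m <- enum 'I_4] ++ [seq gZ4 m + cc | m <- enum 'I_4].

(* Main.v *)
Require Import Defs.
From HB Require Import structures.
From mathcomp Require Import all_boot all_order all_algebra.
Import GRing.Theory.
Local Open Scope ring_scope.

Definition o0 : 'I_4 := @Ordinal 4 0 isT.
Definition o1 : 'I_4 := @Ordinal 4 1 isT.
Definition o2 : 'I_4 := @Ordinal 4 2 isT.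
Definition o3 : 'I_4 := @Ordinal 4 3 isT.
Definition ords := [:: o0; o1; o2; o3].

Lemma ord4_cases (i : 'I_4) : i = o0 \/ i = o1 \/ i = o2 \/ i = o3.
Proof.
case: i => [[|[|[|[|m]]]] Hm];
  [left|right;left|right;right;left|right;right;right|by []]; exact: val_inj.
Qed.

Lemma mem_ords (i : 'I_4) : i \in ords.
Proof. by case: (ord4_cases i) => [->|[->|[->|->]]]. Qed.

Lemma sum4E (R : nmodType) (F : 'I_4 -> R) : \sum_(i < 4) F i = F o0 + F o1 + F o2 + F o3.
Proof.
rewrite !big_ord_recl big_ord0 addr0 !addrA.
by congr (_ + _ + _ + _); congr F; apply: val_inj.
Qed.

Lemma F2_cases (x : 'F_2) : x = 0 \/ x = 1.
Proof.
case: x => [[|[|m]] Hm]; [left|right|by []]; exact: val_inj.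
Qed.

Definition Kc (Vc : structConst) rho (g : 'M[F2]_4) t s : F2 :=
  \sum_(mu < 4) g mu s * Vc mu rho t + \sum_(nu < 4) g t nu * Vc nu rho s.

Lemma sum_delta (R : nmodType) (F : 'I_4 -> R) s :
  \sum_(nu < 4) F nu *+ (nu == s) = F s.
Proof.
rewrite (bigD1 s) //= eqxx mulr1n big1 ?addr0 // => nu /negbTE ->.
by rewrite mulr0n.
Qed.

Lemma ract2E Vc rho g tau s :
  ract2 Vc rho (constForm g) tau s = 'X * (g tau s)%:P + (Kc Vc rho g tau s)%:P.
Proof.
rewrite mxE.
have E mu nu : ract1 Vc rho mu (Rmat Vc rho nu s) 0 tau =
   (('X *+ (mu == tau) + (Vc mu rho tau)%:P) *+ (nu == s)) + (Vc nu rho s)%:P *+ (mu == tau).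
  rewrite /ract1 !mxE rmorphD rmorphMn /= map_polyX map_polyC /=.
  rewrite rmorphD rmorphMn /= horner_mx_X horner_mx_C !mxE mulmxnE !mxE.
  done.
under eq_bigr do under eq_bigr do rewrite E mxE mulrDr !mulrnAr.
under eq_bigr do rewrite big_split /= sum_delta sumrMnl.
rewrite big_split /= sum_delta.
under eq_bigr do rewrite mulrDr mulrnAr.
rewrite big_split /= sum_delta /Kc !rmorphD /= !raddf_sum /=.
rewrite [_ * 'X]mulrC -addrA; congr (_ + (_ + _)); apply: eq_bigr => i _; by rewrite polyCM.
Qed.

Lemma central_iffK Vc g :
  (forall rho, lmul2 (constForm g) = ract2 Vc rho (constForm g)) <->
  (forall rho t s, Kc Vc rho g t s = 0).
Proof.
split=> [H rho t s | H rho].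
  have /matrixP /(_ t s) := H rho.
  rewrite ract2E !mxE -[X in X = _]addr0 => /addrI /esym /eqP.
  by rewrite polyC_eq0 => /eqP.
by apply/matrixP => t s; rewrite ract2E !mxE H addr0.
Qed.

Definition ent (g : 'M[F2]_4) : seq F2 :=
  [:: g o0 o0; g o0 o1; g o0 o2; g o0 o3;
      g o1 o0; g o1 o1; g o1 o2; g o1 o3;
      g o2 o0; g o2 o1; g o2 o2; g o2 o3;
      g o3 o0; g o3 o1; g o3 o2; g o3 o3].

Definition mk (l : seq F2) : 'M[F2]_4 := \matrix_(i, j) nth 0 l (4 * i + j).

Lemma entE (g : 'M[F2]_4) i j : g i j = nth 0 (ent g) (4 * i + j).
Proof.
by case: (ord4_cases i) => [->|[->|[->|->]]]; case: (ord4_cases j) => [->|[->|[->|->]]].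
Qed.

Lemma mk_ent g : mk (ent g) = g.
Proof. by apply/matrixP => i j; rewrite mxE -entE. Qed.

Lemma ent_inj : injective ent.
Proof. by move=> A B E; rewrite -(mk_ent A) E mk_ent. Qed.

Lemma ent_mk l : size l = 16%N -> ent (mk l) = l.
Proof.
do 16! (case: l => [|? l] //); case: l => // _.
by rewrite /ent !mxE.
Qed.

Definition trL (l : seq F2) : seq F2 :=
  [seq nth 0 l (4 * j + i) | i <- [:: 0;1;2;3]%N, j <- [:: 0;1;2;3]%N].

Lemma ent_tr g : ent g^T = trL (ent g).
Proof. by rewrite /ent !mxE. Qed.

Definition sum4f (F : 'I_4 -> F2) := F o0 + F o1 + F o2 + F o3.

Definition Kl (Vc : structConst) rho (l : seq F2) (t s : 'I_4) : F2 :=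
  sum4f (fun mu => nth 0 l (4 * mu + s) * Vc mu rho t) +
  sum4f (fun nu => nth 0 l (4 * t + nu) * Vc nu rho s).

Definition centralb Vc l :=
  all (fun rho => all (fun t => all (fun s => Kl Vc rho l t s == 0) ords) ords) ords.

Lemma central_iff Vc g :
  (forall rho, lmul2 (constForm g) = ract2 Vc rho (constForm g)) <-> centralb Vc (ent g).
Proof.
apply: (iff_trans (central_iffK Vc g)); split.
  move=> H; apply/allP => rho _; apply/allP => t _; apply/allP => s _.
  by rewrite /Kl /sum4f /=; move: (H rho t s); rewrite /Kc !sum4E !entE => ->.
move=> /allP H rho t s.
move: (H rho (mem_ords rho)) => /allP /(_ t (mem_ords t)) /allP /(_ s (mem_ords s)) /eqP.
by rewrite /Kl /sum4f /Kc !sum4E !entE.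
Qed.

Definition mulL (l k : seq F2) : seq F2 :=
  [seq sum4f (fun m => nth 0 l (4 * i + m) * nth 0 k (4 * m + j)) | i <- [:: 0;1;2;3]%N, j <- [:: 0;1;2;3]%N].

Lemma ent_mul A B : ent (A *m B) = mulL (ent A) (ent B).
Proof. by rewrite /ent !mxE !sum4E. Qed.

Definition idL : seq F2 := [:: 1;0;0;0; 0;1;0;0; 0;0;1;0; 0;0;0;1].
Definition zL : seq F2 := [:: 0;0;0;0; 0;0;0;0; 0;0;0;0; 0;0;0;0].
Lemma ent1 : ent 1%:M = idL. Proof. rewrite /ent !mxE. apply/eqP. vm_compute. reflexivity. Qed.
Lemma ent0 : ent 0 = zL. Proof. rewrite /ent !mxE. apply/eqP. vm_compute. reflexivity. Qed.

Definition check (C : seq F2 -> bool) (Sols : seq (seq F2)) (l : seq F2) : bool :=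
  if C l then l \in Sols else true.

Definition forallF2 (B : F2 -> bool) := B 0 && B 1.

Lemma forallF2P B : forallF2 B -> forall x, B x.
Proof. by case/andP=> H0 H1 x; case: (F2_cases x) => ->. Qed.

Definition allcheck C Sols :=
  forallF2 (fun a00 => forallF2 (fun a01 => forallF2 (fun a02 => forallF2 (fun a03 => forallF2 (fun a11 => forallF2 (fun a12 => forallF2 (fun a13 => forallF2 (fun a22 => forallF2 (fun a23 => forallF2 (fun a33 =>
  check C Sols [:: a00; a01; a02; a03; a01; a11; a12; a13; a02; a12; a22; a23; a03; a13; a23; a33])))))))))).

Lemma ent_sym g : g^T = g -> ent g = [:: g o0 o0; g o0 o1; g o0 o2; g o0 o3; g o0 o1; g o1 o1; g o1 o2; g o1 o3; g o0 o2; g o1 o2; g o2 o2; g o2 o3; g o0 o3; g o1 o3; g o2 o3; g o3 o3].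
Proof.
move=> H; have S i j : g j i = g i j by rewrite -{1}H mxE.
by rewrite /ent (S o1 o0) (S o2 o0) (S o3 o0) (S o2 o1) (S o3 o1) (S o3 o2).
Qed.

Lemma allcheckP C Sols : allcheck C Sols -> forall g, g^T = g -> check C Sols (ent g).
Proof.
move=> H g Hs; rewrite (@ent_sym _ Hs); rewrite /allcheck in H.
move: (@forallF2P _ H (g o0 o0)) => {}H /=. move: (@forallF2P _ H (g o0 o1)) => {}H /=. move: (@forallF2P _ H (g o0 o2)) => {}H /=. move: (@forallF2P _ H (g o0 o3)) => {}H /=. move: (@forallF2P _ H (g o1 o1)) => {}H /=. move: (@forallF2P _ H (g o1 o2)) => {}H /=. move: (@forallF2P _ H (g o1 o3)) => {}H /=. move: (@forallF2P _ H (g o2 o2)) => {}H /=. move: (@forallF2P _ H (g o2 o3)) => {}H /=. move: (@forallF2P _ H (g o3 o3)) => {}H /=.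
exact: H.
Qed.

Lemma classify V (C : seq F2 -> bool) (invW kerW : seq (seq F2 * seq F2)) Sols :
  (forall l, centralb V l -> C l) ->
  allcheck C Sols ->
  all (fun l => (l \in map fst invW) || (l \in map fst kerW)) Sols ->
  all (fun p => (size p.2 == 16%N) && (mulL p.1 p.2 == idL)) invW ->
  all (fun p => [&& size p.2 == 16%N, mulL p.1 p.2 == zL & p.2 != zL]) kerW ->
  all (fun l => (trL l == l) && centralb V l) (map fst invW) ->
  forall g, quantum_metric V g <-> ent g \in map fst invW.
Proof.
move=> HC Hall HS Hinv Hker Hgood g; split.
  case=> Hsym Hunit Hc.
  have := @allcheckP _ _ Hall g Hsym; rewrite /check.
  move/central_iff: Hc => /HC -> Hin.
  case/orP: (allP HS _ Hin) => // /mapP [[l k] Hp /= El].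
  case/and3P: (allP Hker _ Hp) => /= /eqP Hsz /eqP Hm Hk.
  have : g *m mk k = 0.
    by apply: ent_inj; rewrite ent_mul ent_mk // El Hm ent0.
  move/(congr1 (mulmx (invmx g))); rewrite mulKmx // mulmx0 => Ek.
  by move: Hk; rewrite -(@ent_mk _ Hsz) Ek ent0 eqxx.
case/mapP=> [[l k] Hp /= El].
case/andP: (allP Hinv _ Hp) => /= /eqP Hsz /eqP Hm.
case/andP: (allP Hgood _ (map_f fst Hp)) => /= /eqP Hs Hc.
split.
- by apply: ent_inj; rewrite ent_tr El.
- have : g *m mk k = 1%:M by apply: ent_inj; rewrite ent_mul ent_mk // El Hm ent1.
  by case/mulmx1_unit.
- by apply/central_iff; rewrite El.
Qed.

Definition SolsZ4 : seq (seq F2) := [:: [:: 0; 0; 0; 0; 0; 0; 0; 0; 0; 0; 0; 0; 0; 0; 0; 0];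
  [:: 0; 0; 0; 1; 0; 0; 1; 0; 0; 1; 0; 0; 1; 0; 0; 0];
  [:: 0; 0; 1; 0; 0; 1; 0; 0; 1; 0; 0; 0; 0; 0; 0; 1];
  [:: 0; 0; 1; 1; 0; 1; 1; 0; 1; 1; 0; 0; 1; 0; 0; 1];
  [:: 0; 1; 0; 0; 1; 0; 0; 0; 0; 0; 0; 1; 0; 0; 1; 0];
  [:: 0; 1; 0; 1; 1; 0; 1; 0; 0; 1; 0; 1; 1; 0; 1; 0];
  [:: 0; 1; 1; 0; 1; 1; 0; 0; 1; 0; 0; 1; 0; 0; 1; 1];
  [:: 0; 1; 1; 1; 1; 1; 1; 0; 1; 1; 0; 1; 1; 0; 1; 1];
  [:: 1; 0; 0; 0; 0; 0; 0; 1; 0; 0; 1; 0; 0; 1; 0; 0];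
  [:: 1; 0; 0; 1; 0; 0; 1; 1; 0; 1; 1; 0; 1; 1; 0; 0];
  [:: 1; 0; 1; 0; 0; 1; 0; 1; 1; 0; 1; 0; 0; 1; 0; 1];
  [:: 1; 0; 1; 1; 0; 1; 1; 1; 1; 1; 1; 0; 1; 1; 0; 1];
  [:: 1; 1; 0; 0; 1; 0; 0; 1; 0; 0; 1; 1; 0; 1; 1; 0];
  [:: 1; 1; 0; 1; 1; 0; 1; 1; 0; 1; 1; 1; 1; 1; 1; 0];
  [:: 1; 1; 1; 0; 1; 1; 0; 1; 1; 0; 1; 1; 0; 1; 1; 1];
  [:: 1; 1; 1; 1; 1; 1; 1; 1; 1; 1; 1; 1; 1; 1; 1; 1]].

Definition invWZ4 : seq (seq F2 * seq F2) := [:: ([:: 1; 0; 0; 0; 0; 0; 0; 1; 0; 0; 1; 0; 0; 1; 0; 0], [:: 1; 0; 0; 0; 0; 0; 0; 1; 0; 0; 1; 0; 0; 1; 0; 0]);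
  ([:: 0; 1; 0; 0; 1; 0; 0; 0; 0; 0; 0; 1; 0; 0; 1; 0], [:: 0; 1; 0; 0; 1; 0; 0; 0; 0; 0; 0; 1; 0; 0; 1; 0]);
  ([:: 0; 0; 1; 0; 0; 1; 0; 0; 1; 0; 0; 0; 0; 0; 0; 1], [:: 0; 0; 1; 0; 0; 1; 0; 0; 1; 0; 0; 0; 0; 0; 0; 1]);
  ([:: 0; 0; 0; 1; 0; 0; 1; 0; 0; 1; 0; 0; 1; 0; 0; 0], [:: 0; 0; 0; 1; 0; 0; 1; 0; 0; 1; 0; 0; 1; 0; 0; 0]);
  ([:: 0; 1; 1; 1; 1; 1; 1; 0; 1; 1; 0; 1; 1; 0; 1; 1], [:: 0; 1; 1; 1; 1; 1; 1; 0; 1; 1; 0; 1; 1; 0; 1; 1]);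
  ([:: 1; 0; 1; 1; 0; 1; 1; 1; 1; 1; 1; 0; 1; 1; 0; 1], [:: 1; 0; 1; 1; 0; 1; 1; 1; 1; 1; 1; 0; 1; 1; 0; 1]);
  ([:: 1; 1; 0; 1; 1; 0; 1; 1; 0; 1; 1; 1; 1; 1; 1; 0], [:: 1; 1; 0; 1; 1; 0; 1; 1; 0; 1; 1; 1; 1; 1; 1; 0]);
  ([:: 1; 1; 1; 0; 1; 1; 0; 1; 1; 0; 1; 1; 0; 1; 1; 1], [:: 1; 1; 1; 0; 1; 1; 0; 1; 1; 0; 1; 1; 0; 1; 1; 1])].

Definition kerWZ4 : seq (seq F2 * seq F2) := [:: ([:: 0; 0; 0; 0; 0; 0; 0; 0; 0; 0; 0; 0; 0; 0; 0; 0], [:: 0; 0; 0; 0; 0; 0; 0; 0; 0; 0; 0; 0; 1; 0; 0; 0]);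
  ([:: 0; 0; 1; 1; 0; 1; 1; 0; 1; 1; 0; 0; 1; 0; 0; 1], [:: 1; 0; 0; 0; 1; 0; 0; 0; 1; 0; 0; 0; 1; 0; 0; 0]);
  ([:: 0; 1; 0; 1; 1; 0; 1; 0; 0; 1; 0; 1; 1; 0; 1; 0], [:: 0; 0; 0; 0; 1; 0; 0; 0; 0; 0; 0; 0; 1; 0; 0; 0]);
  ([:: 0; 1; 1; 0; 1; 1; 0; 0; 1; 0; 0; 1; 0; 0; 1; 1], [:: 1; 0; 0; 0; 1; 0; 0; 0; 1; 0; 0; 0; 1; 0; 0; 0]);
  ([:: 1; 0; 0; 1; 0; 0; 1; 1; 0; 1; 1; 0; 1; 1; 0; 0], [:: 1; 0; 0; 0; 1; 0; 0; 0; 1; 0; 0; 0; 1; 0; 0; 0]);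
  ([:: 1; 0; 1; 0; 0; 1; 0; 1; 1; 0; 1; 0; 0; 1; 0; 1], [:: 0; 0; 0; 0; 1; 0; 0; 0; 0; 0; 0; 0; 1; 0; 0; 0]);
  ([:: 1; 1; 0; 0; 1; 0; 0; 1; 0; 0; 1; 1; 0; 1; 1; 0], [:: 1; 0; 0; 0; 1; 0; 0; 0; 1; 0; 0; 0; 1; 0; 0; 0]);
  ([:: 1; 1; 1; 1; 1; 1; 1; 1; 1; 1; 1; 1; 1; 1; 1; 1], [:: 0; 0; 0; 0; 0; 0; 0; 0; 1; 0; 0; 0; 1; 0; 0; 0])].

Definition SolsA2 : seq (seq F2) := [:: [:: 0; 0; 0; 0; 0; 0; 0; 0; 0; 0; 0; 0; 0; 0; 0; 0];
  [:: 0; 0; 0; 0; 0; 0; 0; 1; 0; 0; 1; 0; 0; 1; 0; 0];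
  [:: 0; 0; 0; 0; 0; 0; 1; 0; 0; 1; 0; 0; 0; 0; 0; 1];
  [:: 0; 0; 0; 0; 0; 0; 1; 1; 0; 1; 1; 0; 0; 1; 0; 1];
  [:: 0; 0; 0; 0; 0; 1; 0; 0; 0; 0; 0; 1; 0; 0; 1; 0];
  [:: 0; 0; 0; 0; 0; 1; 0; 1; 0; 0; 1; 1; 0; 1; 1; 0];
  [:: 0; 0; 0; 0; 0; 1; 1; 0; 0; 1; 0; 1; 0; 0; 1; 1];
  [:: 0; 0; 0; 0; 0; 1; 1; 1; 0; 1; 1; 1; 0; 1; 1; 1];
  [:: 1; 0; 0; 1; 0; 0; 0; 0; 0; 0; 0; 0; 1; 0; 0; 1];
  [:: 1; 0; 0; 1; 0; 0; 0; 1; 0; 0; 1; 0; 1; 1; 0; 1];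
  [:: 1; 0; 0; 1; 0; 0; 1; 0; 0; 1; 0; 0; 1; 0; 0; 0];
  [:: 1; 0; 0; 1; 0; 0; 1; 1; 0; 1; 1; 0; 1; 1; 0; 0];
  [:: 1; 0; 0; 1; 0; 1; 0; 0; 0; 0; 0; 1; 1; 0; 1; 1];
  [:: 1; 0; 0; 1; 0; 1; 0; 1; 0; 0; 1; 1; 1; 1; 1; 1];
  [:: 1; 0; 0; 1; 0; 1; 1; 0; 0; 1; 0; 1; 1; 0; 1; 0];
  [:: 1; 0; 0; 1; 0; 1; 1; 1; 0; 1; 1; 1; 1; 1; 1; 0]].

Definition invWA2 : seq (seq F2 * seq F2) := [:: ([:: 1; 0; 0; 1; 0; 0; 0; 1; 0; 0; 1; 0; 1; 1; 0; 1], [:: 1; 1; 0; 0; 1; 0; 0; 1; 0; 0; 1; 0; 0; 1; 0; 0]);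
  ([:: 1; 0; 0; 1; 0; 0; 1; 0; 0; 1; 0; 0; 1; 0; 0; 0], [:: 0; 0; 0; 1; 0; 0; 1; 0; 0; 1; 0; 0; 1; 0; 0; 1]);
  ([:: 1; 0; 0; 1; 0; 1; 0; 0; 0; 0; 0; 1; 1; 0; 1; 1], [:: 1; 0; 1; 0; 0; 1; 0; 0; 1; 0; 0; 1; 0; 0; 1; 0])].

Definition kerWA2 : seq (seq F2 * seq F2) := [:: ([:: 0; 0; 0; 0; 0; 0; 0; 0; 0; 0; 0; 0; 0; 0; 0; 0], [:: 0; 0; 0; 0; 0; 0; 0; 0; 0; 0; 0; 0; 1; 0; 0; 0]);
  ([:: 0; 0; 0; 0; 0; 0; 0; 1; 0; 0; 1; 0; 0; 1; 0; 0], [:: 1; 0; 0; 0; 0; 0; 0; 0; 0; 0; 0; 0; 0; 0; 0; 0]);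
  ([:: 0; 0; 0; 0; 0; 0; 1; 0; 0; 1; 0; 0; 0; 0; 0; 1], [:: 1; 0; 0; 0; 0; 0; 0; 0; 0; 0; 0; 0; 0; 0; 0; 0]);
  ([:: 0; 0; 0; 0; 0; 0; 1; 1; 0; 1; 1; 0; 0; 1; 0; 1], [:: 0; 0; 0; 0; 1; 0; 0; 0; 1; 0; 0; 0; 1; 0; 0; 0]);
  ([:: 0; 0; 0; 0; 0; 1; 0; 0; 0; 0; 0; 1; 0; 0; 1; 0], [:: 1; 0; 0; 0; 0; 0; 0; 0; 0; 0; 0; 0; 0; 0; 0; 0]);
  ([:: 0; 0; 0; 0; 0; 1; 0; 1; 0; 0; 1; 1; 0; 1; 1; 0], [:: 0; 0; 0; 0; 1; 0; 0; 0; 1; 0; 0; 0; 1; 0; 0; 0]);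
  ([:: 0; 0; 0; 0; 0; 1; 1; 0; 0; 1; 0; 1; 0; 0; 1; 1], [:: 0; 0; 0; 0; 1; 0; 0; 0; 1; 0; 0; 0; 1; 0; 0; 0]);
  ([:: 0; 0; 0; 0; 0; 1; 1; 1; 0; 1; 1; 1; 0; 1; 1; 1], [:: 0; 0; 0; 0; 0; 0; 0; 0; 1; 0; 0; 0; 1; 0; 0; 0]);
  ([:: 1; 0; 0; 1; 0; 0; 0; 0; 0; 0; 0; 0; 1; 0; 0; 1], [:: 0; 0; 0; 0; 0; 0; 0; 0; 1; 0; 0; 0; 0; 0; 0; 0]);
  ([:: 1; 0; 0; 1; 0; 0; 1; 1; 0; 1; 1; 0; 1; 1; 0; 0], [:: 1; 0; 0; 0; 1; 0; 0; 0; 1; 0; 0; 0; 1; 0; 0; 0]);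
  ([:: 1; 0; 0; 1; 0; 1; 0; 1; 0; 0; 1; 1; 1; 1; 1; 1], [:: 1; 0; 0; 0; 1; 0; 0; 0; 1; 0; 0; 0; 1; 0; 0; 0]);
  ([:: 1; 0; 0; 1; 0; 1; 1; 0; 0; 1; 0; 1; 1; 0; 1; 0], [:: 1; 0; 0; 0; 1; 0; 0; 0; 1; 0; 0; 0; 1; 0; 0; 0]);
  ([:: 1; 0; 0; 1; 0; 1; 1; 1; 0; 1; 1; 1; 1; 1; 1; 0], [:: 0; 0; 0; 0; 1; 0; 0; 0; 1; 0; 0; 0; 0; 0; 0; 0])].

Lemma enum_ord4 : enum 'I_4 = ords.
Proof. by apply: (inj_map val_inj); rewrite val_enum_ord. Qed.

Lemma Z4ents : map ent Z4metrics = map fst invWZ4.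
Proof. rewrite /Z4metrics enum_ord4 /= /ent !mxE. apply/eqP. vm_compute. reflexivity. Qed.

Definition phi (x : F2) : bool := (nat_of_ord x == 1)%N.

Lemma phiD x y : phi (x + y) = phi x (+) phi y.
Proof. by case: (F2_cases x) => ->; case: (F2_cases y) => ->; vm_compute. Qed.
Lemma phiM x y : phi (x * y) = phi x && phi y.
Proof. by case: (F2_cases x) => ->; case: (F2_cases y) => ->; vm_compute. Qed.
Lemma phi_eq0 x : (x == 0) = ~~ phi x.
Proof. by case: (F2_cases x) => ->; vm_compute. Qed.
Lemma phi_nat (b : bool) : phi (b%:R) = b.
Proof. by case: b; vm_compute. Qed.
Lemma nth_phi (l : seq F2) n : phi (nth 0 l n) = nth false (map phi l) n.
Proof.
elim: l n => [|x l IH] [|n] //=; by vm_compute.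
Qed.

Definition sum4b (F : 'I_4 -> bool) := F o0 (+) F o1 (+) F o2 (+) F o3.
Definition KB (Vb : 'I_4 -> 'I_4 -> 'I_4 -> bool) rho (bl : seq bool) (t s : 'I_4) : bool :=
  sum4b (fun mu => nth false bl (4 * mu + s) && Vb mu rho t) (+)
  sum4b (fun nu => nth false bl (4 * t + nu) && Vb nu rho s).
Definition centralB Vb bl :=
  all (fun rho => all (fun t => all (fun s => ~~ KB Vb rho bl t s) ords) ords) ords.

Lemma centralb_B Vc Vb (HV : forall a b c, phi (Vc a b c) = Vb a b c) l :
  centralb Vc l = centralB Vb (map phi l).
Proof.
apply: eq_all => rho; apply: eq_all => t; apply: eq_all => s.
by rewrite /Kl /sum4f /KB /sum4b phi_eq0 !phiD !phiM !HV !nth_phi.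
Qed.

Definition VZ4b : 'I_4 -> 'I_4 -> 'I_4 -> bool :=
  fun mu nu rho => ((mu + nu) %% 4 == rho)%N.
Definition VA2b : 'I_4 -> 'I_4 -> 'I_4 -> bool :=
  fun mu nu rho => (let s := (mu + nu)%N in (if (s < 4)%N then s else (s - 3)%N) == rho)%N.

Lemma chkZ4 : allcheck (fun l => centralB VZ4b (map phi l)) SolsZ4.
Proof. vm_compute. reflexivity. Qed.
Lemma chkA2 : allcheck (fun l => centralB VA2b (map phi l)) SolsA2.
Proof. vm_compute. reflexivity. Qed.

Lemma classZ4 g : quantum_metric VZ4 g <-> ent g \in map fst invWZ4.
Proof.
apply: (@classify VZ4 _ invWZ4 kerWZ4 SolsZ4 _ chkZ4); try by vm_compute.
by move=> l; rewrite (@centralb_B _ VZ4b) // => a b c; rewrite /VZ4 phi_nat.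
Qed.

Lemma classA2 g : quantum_metric VA2 g <-> ent g \in map fst invWA2.
Proof.
apply: (@classify VA2 _ invWA2 kerWA2 SolsA2 _ chkA2); try by vm_compute.
by move=> l; rewrite (@centralb_B _ VA2b) // => a b c; rewrite /VA2 phi_nat.
Qed.

Theorem mainTheorem11 :
  (* (a) *)
  (uniq Z4metrics /\ size Z4metrics = 8%N /\
   forall g : 'M['F_2]_4, quantum_metric VZ4 g <-> g \in Z4metrics) /\
  (* (b) *)
  (exists s : seq 'M['F_2]_4,
     uniq s /\ size s = 3%N /\
     forall g : 'M['F_2]_4, quantum_metric VA2 g <-> g \in s).
Proof.
split.
  split; first by rewrite -(map_inj_uniq ent_inj) Z4ents; vm_compute.
  split; first by rewrite /Z4metrics enum_ord4.
  move=> g; rewrite -(mem_map ent_inj) Z4ents; exact: classZ4.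
have E : map ent (map mk (map fst invWA2)) = map fst invWA2.
  rewrite -map_comp; apply: map_id_in => l Hl /=; apply: ent_mk.
  have H : all (fun l : seq F2 => size l == 16%N) (map fst invWA2) by vm_compute.
  by move/eqP: (allP H _ Hl).
exists (map mk (map fst invWA2)); split.
  by rewrite -(map_inj_uniq ent_inj) E; vm_compute.
split; first by [].
by move=> g; rewrite -(mem_map ent_inj) E; exact: classA2.
Qed.
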